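(* Let $\overline{M}\in\{1,2,\dots\}\cup\{\infty\}$. In the random coefficients perturbed utility model described in the context, suppose that Assumptions 1–6 (as stated in the context) hold for each natural number $M\le\overline{M}$, and that the distribution $\nu$ of $\beta$ is determined by its moments of order at most $\overline{M}$ (i.e. any probability distribution having the same moments of all orders $M\le \overline{M}$ equals $\nu$). Then the distribution of $\beta$ is identified.
   Context: Model. There are $K$ goods. For each good $k\in\{1,\dots,K\}$ there is a covariate vector $x_k=(x_{k,1},\dots,x_{k,d_k})'\in\mathbb{R}^{d_k}$ and a random coefficient vector $\beta_k=(\beta_{k,1},\dots,\beta_{k,d_k})'\in\mathbb{R}^{d_k}$; write $x=(x_1',\dots,x_K')'\in\mathbb{R}^{d}$ with $d=\sum_k d_k$, and $\beta=(\beta_1',\dots,\beta_K')'$. Let $\varepsilon$ be an unobservable of unrestricted dimension taking values in a measurable space $E$, let $B\subseteq\mathbb{R}^K$ be a feasibility set and $D:B\times E\to\mathbb{R}\cup\{-\infty\}$ a disturbance. Choices satisfy $Y(x,\beta,\varepsilon)\in\arg\max_{y\in B}\sum_{k=1}^K y_k(\beta_k'x_k)+D(y,\varepsilon)$ (argmax nonempty). The average structural function is $\overline{Y}(x)=\int Y(x,\beta,\varepsilon)\,d\tau(\beta,\varepsilon)$ for a probability measure $\tau$ not depending on $x$; $\overline{Y}_k$ is its $k$-th component. Assumption 1: under $\tau$, $\beta$ and $\varepsilon$ are independent, $\tau=\nu\otimes\mu$, and $\overline{Y}(x)$ is finite. Define $\overline{Y}(x,\beta)=\int Y(x,\beta,\varepsilon)\,d\mu(\varepsilon)$,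 so $\overline{Y}(x)=\int\overline{Y}(x,\beta)\,d\nu(\beta)$. Let $\overline{B}$ be the convex hull of $B$ and $\overline{D}(y)=\sup\{\int D(\tilde Y(\varepsilon),\varepsilon)\,d\mu(\varepsilon):\tilde Y:E\to B\text{ measurable},\ \int\tilde Y\,d\mu=y\}$ ($\sup\emptyset=-\infty$). Assumption 2: (i) $\overline{Y}(x,\beta)$ equals (is the unique element of) $\arg\max_{y\in\overline{B}}\sum_k y_k(\beta_k'x_k)+\overline{D}(y)$; (ii) $\overline{B}$ is nonempty, closed, convex; (iii) $\overline{D}:\mathbb{R}^K\to\mathbb{R}\cup\{-\infty\}$ is concave, upper semicontinuous, finite at some $y\in\overline{B}$. Define $V(u)=\max_{y\in\overline{B}}\sum_k y_ku_k+\overline{D}(y)$, $u\in\mathbb{R}^K$, and $\partial_\gamma V=\partial_{\gamma_1}\cdots\partial_{\gamma_m}V$ for $\gamma\in\{1,\dots,K\}^m$. Assumption 3: all covariates are continuous, and each $x_k$ is specific to good $k$ (enters only $\beta_k'x_k$). Assumption 4 (for $M$): $\int\beta_{1,1}^M\,d\nu$ is finite, known a priori, and nonzero. Assumption 5 (for $M$): (i) for each $k$ and every $M$-th order partial derivative, $\partial_{x_{k_1,\ell_1}}\cdots\partial_{x_{k_M,\ell_M}}\overline{Y}_k(0)=\int\partial_{x_{k_1,\ell_1}}\cdots\partial_{x_{k_M,\ell_M}}\overline{Y}_k(0,\beta)\,d\nu(\beta)$; (ii) all $M$-th order moments $\int\beta_{k_1,\ell_1}\cdots\beta_{k_M,\ell_M}\,d\nu$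 exist and are finite; (iii) $V$ is $(M+1)$-times continuously differentiable near $0$; (iv) $\partial_\gamma V(0)\ne0$ for all $\gamma\in\{1,\dots,K\}^{M+1}$; (v) $\overline{Y}(x)$ is known on a neighborhood of $0$, or more generally on $H\cap\mathbb{R}^d_+$ for a neighborhood $H$ of $0$. Assumption 6 (for $M$): for each $(k_1,\dots,k_M)\in\{1,\dots,K\}^M$ there exist $\ell_m\in\{1,\dots,d_{k_m}\}$ with $\int\beta_{k_1,\ell_1}\cdots\beta_{k_M,\ell_M}\,d\nu$ existing and nonzero. Identification: a quantity is identified if it is uniquely determined by the objects assumed known (the average structural function on the stated region and the quantities assumed known a priori), i.e. all specifications $(B,D,\mu,\nu)$ satisfying the hypotheses and generating the same known objects yield the same value. *)

(* Defs.v *)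
From HB Require Import structures.
From mathcomp Require Import all_boot all_order all_algebra.
From mathcomp Require Import all_classical all_reals all_analysis.
Set Implicit Arguments.
Unset Strict Implicit.
Unset Printing Implicit Defensive.
Import Order.TTheory GRing.Theory Num.Theory.
Import numFieldNormedType.Exports.
Local Open Scope classical_set_scope.
Local Open Scope ring_scope.

Section Model.
Variables (R : realType) (K : nat) (dk : 'I_K -> nat).

(* coordinate index (k, l) of x = (x_1', ..., x_K')' : good k, l < d_k *)
Definition Idx := {k : 'I_K & 'I_(dk k)}.
Definition cidx (k : 'I_K) (l : 'I_(dk k)) : Idx := existT _ k l.

Definition cvec := Idx -> R.

(* product (Borel) sigma-algebra on R^d: generated by the coordinates *)
Definition coord_gen : set (set cvec) :=
  [set S | exists (c : Idx) (A : set R), measurable A /\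
           S = (fun b : cvec => b c) @^-1` A].
Definition betaT := g_sigma_algebraType coord_gen.

Definition dotk (b x : cvec) (k : 'I_K) : R :=
  \sum_(l < dk k) b (cidx l) * x (cidx l).
Definition uvec (b x : cvec) : 'rV[R]_K := \row_k dotk b x k.

Definition util (u : 'rV[R]_K) (Dy : 'rV[R]_K -> \bar R) (y : 'rV[R]_K)
  : \bar R := ((\sum_k y 0 k * u 0 k)%:E + Dy y)%E.

Definition is_argmax (S : set 'rV[R]_K) (f : 'rV[R]_K -> \bar R) y :=
  S y /\ forall y', S y' -> (f y' <= f y)%E.

Definition conv_hull (B : set 'rV[R]_K) : set 'rV[R]_K :=
  [set y | exists (n : nat) (w : 'I_n -> R) (p : 'I_n -> 'rV[R]_K),
     (forall i, 0 <= w i) /\ \sum_i w i = 1 /\ (forall i, B (p i)) /\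
     y = \sum_i w i *: p i].

Definition is_convex (S : set 'rV[R]_K) :=
  forall a b (t : R), S a -> S b -> 0 <= t <= 1 -> S (t *: a + (1 - t) *: b).

Definition concave_e (f : 'rV[R]_K -> \bar R) :=
  forall a b (t : R), 0 <= t <= 1 ->
    (t%:E * f a + (1 - t)%:E * f b <= f (t *: a + (1 - t) *: b)%R)%E.

Definition usc (f : 'rV[R]_K -> \bar R) :=
  forall y (a : R), (f y < a%:E)%E -> \forall y' \near y, (f y' < a%:E)%E.

Definition mom (s : seq Idx) (b : cvec) : R := \prod_(c <- s) b c.

Definition zerox : cvec := fun _ => 0.

Definition shiftx (x : cvec) (c : Idx) (t : R) : cvec :=
  fun c' => if c' == c then x c' + t else x c'.

Definition pderivx (f : cvec -> R) (s : seq Idx) : cvec -> R :=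
  foldr (fun c g => fun x => derive (fun t => g (shiftx x c t)) 0 1) f s.

Fixpoint pderivablex (f : cvec -> R) (s : seq Idx) (x : cvec) : Prop :=
  match s with
  | [::] => True
  | c :: s' => derivable (fun t => pderivx f s' (shiftx x c t)) 0 1 /\
               \forall t \near (0 : R), pderivablex f s' (shiftx x c t)
  end.

Definition pderivV (f : 'rV[R]_K -> R) (g : seq 'I_K) : 'rV[R]_K -> R :=
  foldr (fun k h => fun u => derive h u (delta_mx 0 k)) f g.

Definition Cn_near (f : 'rV[R]_K -> R) (m : nat) (a : 'rV[R]_K) :=
  \forall u \near a,
    (forall g : seq 'I_K, (size g < m)%N ->
       forall k, derivable (pderivV f g) u (delta_mx 0 k)) /\
    (forall g : seq 'I_K, (size g <= m)%N -> {for u, continuous (pderivV f g)}).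

(* M <= Mbar, Mbar in {1,2,...} \cup {oo} (None = oo) *)
Definition upto (Mbar : option nat) (M : nat) : bool :=
  if Mbar is Some m then (M <= m)%N else true.

Section Spec.
Variables (d : measure_display) (E : measurableType d)
  (B : set 'rV[R]_K) (D : 'rV[R]_K -> E -> \bar R)
  (mu : probability E R) (nu : probability betaT R)
  (Y : cvec -> cvec -> E -> 'rV[R]_K).

Definition model :=
  (forall y e, B y -> D y e != +oo%E) /\
  forall (x b : cvec) e,
    is_argmax B (util (uvec b x) (D ^~ e)) (Y x b e).

Definition ASF (x : cvec) (k : 'I_K) : \bar R :=
  (\int[(nu \x mu)%E]_z (Y x z.1 z.2 0 k)%:E)%E.

Definition Ybar (x b : cvec) (k : 'I_K) : \bar R :=
  (\int[mu]_e (Y x b e 0 k)%:E)%E.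

Definition Bbar := conv_hull B.

Definition Dbar (y : 'rV[R]_K) : \bar R :=
  ereal_sup [set (\int[mu]_e D (Yt e) e)%E | Yt in
     [set Yt : E -> 'rV[R]_K | (forall e, B (Yt e)) /\
        forall k, mu.-integrable setT (fun e => (Yt e 0 k)%:E) /\
                  (\int[mu]_e (Yt e 0 k)%:E = (y 0 k)%:E)%E]].

Definition V (u : 'rV[R]_K) : \bar R :=
  ereal_sup [set util u Dbar y | y in Bbar].

Definition assumption1 :=
  forall x k, (nu \x mu)%E.-integrable setT
                (fun z : betaT * E => (Y x z.1 z.2 0 k)%:E).

Definition assumption2 :=
  (forall x b : cvec, exists y0 : 'rV[R]_K,
     (forall k, Ybar x b k = (y0 0 k)%:E) /\
     [set y | is_argmax Bbar (util (uvec b x) Dbar) y] = [set y0]) /\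
  (Bbar !=set0 /\ closed Bbar /\ is_convex Bbar) /\
  ((forall y, Dbar y != +oo%E) /\ concave_e Dbar /\ usc Dbar /\
   exists2 y, Bbar y & Dbar y \is a fin_num).

Variables (hK : (0 < K)%N) (hd1 : (0 < dk (Ordinal hK))%N).
Definition c11 : Idx := cidx (Ordinal hd1).

Definition assumption4 (M : nat) :=
  nu.-integrable setT (fun b => (mom (nseq M c11) b)%:E) /\
  (\int[nu]_b (mom (nseq M c11) b)%:E != 0)%E.

Definition assumption5 (M : nat) :=
  (forall (k : 'I_K) (s : seq Idx), size s = M ->
     pderivablex (fun x => fine (ASF x k)) s zerox /\
     (pderivx (fun x => fine (ASF x k)) s zerox)%:E =
       (\int[nu]_b (pderivx (fun x => fine (Ybar x b k)) s zerox)%:E)%E) /\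
  (forall s : seq Idx, size s = M ->
     nu.-integrable setT (fun b => (mom s b)%:E)) /\
  ((\forall u \near (0 : 'rV[R]_K), V u \is a fin_num) /\
   Cn_near (fun u => fine (V u)) M.+1 0) /\
  (forall g : seq 'I_K, size g = M.+1 -> pderivV (fun u => fine (V u)) g 0 != 0).

Definition assumption6 (M : nat) :=
  forall ks : seq 'I_K, size ks = M ->
    exists s : seq Idx, map tag s = ks /\
      nu.-integrable setT (fun b => (mom s b)%:E) /\
      (\int[nu]_b (mom s b)%:E != 0)%E.

Definition moment_determinate (Mbar : option nat) :=
  forall nu' : probability betaT R,
    (forall (s : seq Idx), (0 < size s)%N -> upto Mbar (size s) ->
       nu'.-integrable setT (fun b => (mom s b)%:E) /\
       (\int[nu']_b (mom s b)%:E = \int[nu]_b (mom s b)%:E)%E) ->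
    forall A, measurable A -> nu' A = nu A.

Definition hypotheses (Mbar : option nat) :=
  model /\ assumption1 /\ assumption2 /\
  (forall M, (0 < M)%N -> upto Mbar M ->
     assumption4 M /\ assumption5 M /\ assumption6 M) /\
  moment_determinate Mbar.

End Spec.
End Model.

Definition Mbar_ok (Mbar : option nat) : bool :=
  if Mbar is Some m then (0 < m)%N else true.

(* Main.v *)
Require Import Defs.
From HB Require Import structures.
From mathcomp Require Import all_boot all_order all_algebra.
From mathcomp Require Import all_classical all_reals all_analysis.
From mathcomp Require Import ring lra zify.
Import Order.TTheory GRing.Theory Num.Theory.
Import numFieldNormedType.Exports.
Local Open Scope classical_set_scope.
Local Open Scope ring_scope.


Section Gen.
Variables (R : realType) (n : nat).
Implicit Types (f : 'rV[R]_n -> R) (w e a c : 'rV[R]_n).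

Lemma line_quot f w e (s0 : R) :
  (fun h : R => h^-1 *: (((fun s : R => f (w + s *: e)) \o shift s0) (h *: 1) -
                          (fun s : R => f (w + s *: e)) s0)) =
  (fun h : R => h^-1 *: ((f \o shift (w + s0 *: e)) (h *: e) - f (w + s0 *: e))).
Proof.
apply/funext => h /=; congr (_ *: (f _ - _)).
by rewrite [h *: 1]mulr1 scalerDl addrCA addrC.
Qed.

Lemma derive_line f w e (s0 : R) :
  derive (fun s : R => f (w + s *: e)) (s0 : R) 1 = derive f (w + s0 *: e) e.
Proof. by rewrite /derive line_quot. Qed.

Lemma derivable_line f w e (s0 : R) :
  derivable (fun s : R => f (w + s *: e)) (s0 : R) 1 <-> derivable f (w + s0 *: e) e.
Proof. by rewrite /derivable line_quot. Qed.

Lemma derive_scale f a v (c : R) : derivable f a v ->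
  derive f a (c *: v) = c * derive f a v.
Proof.
move=> df.
have e1 : (fun s => f (a + s *: (c *: v))) =
          (fun s => f (a + s *: v)) \o (fun s => c * s).
  by apply/funext => s /=; rewrite scalerA mulrC.
have hd : derivable (fun s : R => c * s) 0 1.
  have -> : (fun s : R => c * s) = c \*: id by [].
  by apply: derivableZ; exact: derivable_id.
have gd : derivable (fun s : R => f (a + s *: v)) (c * 0) 1.
  by apply/derivable_line; rewrite mulr0 scale0r addr0.
have := derive1_comp hd gd; rewrite -e1 !derive1E => H.
rewrite -[in LHS](addr0 a) -[in X in _ (_ + X) _](scale0r (c *: v)) -derive_line H.
rewrite derive_line mulr0 scale0r addr0 mulrC; congr (_ * _).
have -> : (fun s : R => c * s) = c \*: id by [].
rewrite deriveZ ?derive_id //.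
by rewrite /GRing.scale /= mulr1.
Qed.

Lemma shift_quot f c a e :
  (fun h : R => h^-1 *: (((fun v => f (v + c)) \o shift a) (h *: e) - f (a + c))) =
  (fun h : R => h^-1 *: ((f \o shift (a + c)) (h *: e) - f (a + c))).
Proof. by apply/funext => h /=; rewrite addrA. Qed.

Lemma derive_shiftv f c a e :
  derive (fun v => f (v + c)) a e = derive f (a + c) e.
Proof. by rewrite /derive shift_quot. Qed.

Lemma derivable_shiftv f c a e :
  derivable (fun v => f (v + c)) a e <-> derivable f (a + c) e.
Proof. by rewrite /derivable shift_quot. Qed.
End Gen.

Section Gen.
Variables (R : realType) (n : nat).
Implicit Types (f : 'rV[R]_n -> R) (w e : 'rV[R]_n).

Lemma near_box (P : set 'rV[R]_n) (u : 'rV[R]_n) e1 e2 : (\forall v \near u, P v) ->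
  exists2 d : R, 0 < d & forall s t : R, `|s| < d -> `|t| < d ->
    P (u + t *: e2 + s *: e1).
Proof.
move=> /nbhs_normP [r r0 Hr].
set c := `|e1| + `|e2| + 1.
have c0 : 0 < c by rewrite /c ltr_wpDl // addr_ge0.
exists (r / c); first by rewrite divr_gt0.
move=> s t hs ht; apply: Hr => /=.
rewrite -addrA opprD addrA subrr sub0r normrN.
apply: (le_lt_trans (ler_normD _ _)); rewrite !normrZ.
have h1 : `|t| * `|e2| <= r / c * `|e2| by rewrite ler_wpM2r // ltW.
have h2 : `|s| * `|e1| <= r / c * `|e1| by rewrite ler_wpM2r // ltW.
apply: (le_lt_trans (lerD h1 h2)).
rewrite -mulrDr [X in _ < X](_ : r = r / c * c); last by rewrite divfK // gt_eqF.
by rewrite ltr_pM2l ?divr_gt0 // /c addrC ltrDl.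
Qed.


Lemma near_line (P : set 'rV[R]_n) (u : 'rV[R]_n) w : (\forall v \near u, P v) ->
  \forall t \near (0 : R), P (u + t *: w).
Proof.
move=> H; have [d d0 Hd] := near_box _ _ 0 w H.
exists d => //= t; rewrite /ball_ /= sub0r normrN => ht.
by have := Hd 0 t; rewrite normr0 scaler0 addr0; apply.
Qed.

End Gen.

Section Gen.
Variables (R : realType) (n : nat).
Implicit Types (f : 'rV[R]_n -> R) (w e : 'rV[R]_n).

Lemma mvt_line f w e (h : R) : 0 < h ->
  (forall s : R, 0 <= s <= h -> derivable f (w + s *: e) e) ->
  exists2 s : R, 0 < s < h & f (w + h *: e) - f w = derive f (w + s *: e) e * h.
Proof.
move=> h0 Hd.
have Hd' : forall s, s \in `[0, h] -> derivable (fun s : R => f (w + s *: e)) s 1.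
  by move=> s; rewrite in_itv /= => /Hd; rewrite -derivable_line.
have H1 : forall x, x \in `]0, h[ -> is_derive x 1 (fun s : R => f (w + s *: e))
    (derive f (w + x *: e) e).
  move=> x xin; apply: DeriveDef; last by rewrite derive_line.
  by apply: Hd'; move: xin; rewrite !in_itv /= => /andP[/ltW -> /ltW ->].
have H2 : {within `[0, h], continuous (fun s : R => f (w + s *: e))}.
  by apply: derivable_within_continuous => x xin; apply: Hd'; exact: xin.
have [c cin Hc] := MVT h0 H1 H2.
exists c; first by move: cin; rewrite in_itv.
by move: Hc; rewrite scale0r addr0 subr0.
Qed.

Lemma mixed f u e1 e2 (h d : R) : 0 < h -> h < d ->
  (forall s t : R, `|s| < d -> `|t| < d ->
     derivable f (u + t *: e2 + s *: e1) e1 /\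
     derivable (fun v => derive f v e1) (u + t *: e2 + s *: e1) e2) ->
  exists s t : R, [/\ 0 < s < h, 0 < t < h &
    f (u + h *: e2 + h *: e1) - f (u + h *: e2) - f (u + h *: e1) + f u =
    derive (fun v => derive f v e1) (u + t *: e2 + s *: e1) e2 * h * h].
Proof.
move=> h0 hd Hd.
have inb : forall s : R, 0 <= s <= h -> `|s| < d.
  by move=> s /andP[s0 sh]; rewrite ger0_norm // (le_lt_trans sh).
have hh : 0 <= h <= h by rewrite (ltW h0) /=.
have h00 : 0 <= (0:R) <= h by rewrite (ltW h0) lexx.
have Hf1 : forall s : R, 0 <= s <= h ->
    derivable (fun v => f (v + h *: e2) - f v) (u + s *: e1) e1.
  move=> s sin; have [D1 _] := Hd s h (inb _ sin) (inb h hh).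
  have [D2 _] := Hd s 0 (inb _ sin) (inb 0 h00).
  apply: derivableB.
    by apply/derivable_shiftv; rewrite addrAC.
  by move: D2; rewrite scale0r addr0.
have [xi xin Hxi] := mvt_line _ _ _ _ h0 Hf1.
have xi0 : 0 <= xi <= h by case/andP: xin => /ltW -> /ltW ->.
have [D1 _] := Hd xi h (inb _ xi0) (inb h hh).
have [D2 _] := Hd xi 0 (inb _ xi0) (inb 0 h00).
move: D2; rewrite scale0r addr0 => D2.
rewrite deriveB // ?derive_shiftv in Hxi; last first.
  by apply/derivable_shiftv; rewrite addrAC.
have Hg : forall t : R, 0 <= t <= h ->
    derivable (fun v => derive f v e1) (u + xi *: e1 + t *: e2) e2.
  by move=> t tin; have [_ ] := Hd xi t (inb _ xi0) (inb _ tin); rewrite addrAC.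
have [eta etain Heta] := mvt_line _ _ _ _ h0 Hg.
exists xi, eta; split => //.
rewrite [u + eta *: e2 + xi *: e1]addrAC -Heta -Hxi.
rewrite [u + h *: e2 + h *: e1]addrAC.
ring.
Qed.
End Gen.


Section Schwarz.
Variables (R : realType) (n : nat).
Implicit Types (f : 'rV[R]_n -> R) (w e : 'rV[R]_n).

Lemma eq_by_approx (a b : R) :
  (forall eps, 0 < eps -> exists p q, [/\ `|a - p| < eps, `|b - q| < eps & p = q]) ->
  a = b.
Proof.
move=> H; apply/eqP/negPn/negP => ab.
have e0 : 0 < `|a - b| / 2 by rewrite divr_gt0 // normr_gt0 subr_eq0.
have [p [q [ap bq pq]]] := H _ e0.
have : `|a - b| < `|a - b| / 2 + `|a - b| / 2.
  rewrite {1}(_ : a - b = (a - p) - (b - q)); last by rewrite pq; ring.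
  apply: (le_lt_trans (ler_normB _ _)).
  by rewrite ltrD.
by rewrite -splitr ltxx.
Qed.

Lemma aux_cancel (a b c X1 X2 X3 X4 : R) : c != 0 ->
  X1 - X2 - X3 + X4 = a * c * c -> X1 - X3 - X2 + X4 = b * c * c -> a = b.
Proof.
move=> c0 E1 E2.
have : a * c * c = b * c * c by rewrite -E1 -E2; ring.
by move/(mulIf c0)/(mulIf c0).
Qed.

Lemma schwarz f (u e1 e2 : 'rV[R]_n) :
  (\forall v \near u, [/\ derivable f v e1, derivable f v e2,
      derivable (fun w => derive f w e1) v e2 &
      derivable (fun w => derive f w e2) v e1]) ->
  {for u, continuous (fun v => derive (fun w => derive f w e1) v e2)} ->
  {for u, continuous (fun v => derive (fun w => derive f w e2) v e1)} ->
  derive (fun w => derive f w e1) u e2 = derive (fun w => derive f w e2) u e1.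
Proof.
move=> Hd cA cB; apply: eq_by_approx => eps eps0.
have HA := proj1 (cvgrPdist_lt _ _) cA eps eps0.
have HB := proj1 (cvgrPdist_lt _ _) cB eps eps0.
have {}HA := HA (nbhs_filter u).
have {}HB := HB (nbhs_filter u).
have [d d0 Hbox] := @near_box R n _ _ e1 e2 (filterI Hd (filterI HA HB)).
have h0 : 0 < d / 2 by rewrite divr_gt0.
have hd : d / 2 < d by rewrite ltr_pdivrMr // ltr_pMr // ltr1n.
have H1 : forall s t : R, `|s| < d -> `|t| < d ->
     derivable f (u + t *: e2 + s *: e1) e1 /\
     derivable (fun v => derive f v e1) (u + t *: e2 + s *: e1) e2.
  by move=> s t hs ht; have [[a _ c _] _] := Hbox s t hs ht.
have H2 : forall s t : R, `|s| < d -> `|t| < d ->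
     derivable f (u + t *: e1 + s *: e2) e2 /\
     derivable (fun v => derive f v e2) (u + t *: e1 + s *: e2) e1.
  by move=> s t hs ht; have [[_ b _ c] _] := Hbox t s ht hs; rewrite addrAC.
have [s [t [sin tin E1]]] := @mixed R n f u e1 e2 (d/2) d h0 hd H1.
have [s' [t' [sin' tin' E2]]] := @mixed R n f u e2 e1 (d/2) d h0 hd H2.
have lt_d : forall x : R, 0 < x < d / 2 -> `|x| < d.
  by move=> x /andP[x0 xd]; rewrite gtr0_norm // (lt_trans xd).
have [_ [Ha _]] := Hbox s t (lt_d _ sin) (lt_d _ tin).
have [_ [_ Hb]] := Hbox t' s' (lt_d _ tin') (lt_d _ sin').
exists (derive (fun w => derive f w e1) (u + t *: e2 + s *: e1) e2).
exists (derive (fun w => derive f w e2) (u + t' *: e1 + s' *: e2) e1).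
split; [exact: Ha | rewrite addrAC; exact: Hb | ].
rewrite (addrAC u ((d/2) *: e1)) in E2.
have c0 : d / 2 != 0 by rewrite gt_eqF.
exact: (@aux_cancel _ _ _ _ _ _ _ c0 E1 E2).
Qed.
End Schwarz.

Set Implicit Arguments.
Unset Strict Implicit.

Section PV.
Variables (R : realType) (K : nat).
Implicit Types (f g : 'rV[R]_K -> R).

Definition CnP f (m : nat) (u : 'rV[R]_K) :=
    (forall g : seq 'I_K, (size g < m)%N ->
       forall k, derivable (pderivV f g) u (delta_mx 0 k)) /\
    (forall g : seq 'I_K, (size g <= m)%N -> {for u, continuous (pderivV f g)}).

Lemma pderivV_cat f (g1 g2 : seq 'I_K) : pderivV f (g1 ++ g2) = pderivV (pderivV f g2) g1.
Proof. by rewrite /pderivV foldr_cat. Qed.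

Lemma pderivV_loc f g (U : set 'rV[R]_K) : open U ->
  (forall u, U u -> f u = g u) -> forall p u, U u -> pderivV f p u = pderivV g p u.
Proof.
move=> oU fg; elim=> [|a p IH] u Uu /=; first exact: fg.
apply: near_eq_derive.
have : nbhs u U by apply: open_nbhs_nbhs.
by apply: filterS => v Uv; apply: IH.
Qed.

Lemma swap_loc f (U : set 'rV[R]_K) M : open U ->
  (forall u, U u -> CnP f M.+1 u) ->
  forall q a b, ((size q).+2 <= M.+1)%N -> forall u, U u ->
  pderivV f (a :: b :: q) u = pderivV f (b :: a :: q) u.
Proof.
move=> oU HC q a b sq u Uu /=.
have nU : nbhs u U by apply: open_nbhs_nbhs.
apply: schwarz.
- apply: filterS nU => v /HC [Hd _]; split.
  + by apply: Hd; apply: leq_ltn_trans sq.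
  + by apply: Hd; apply: leq_ltn_trans sq.
  + by apply: (Hd (b :: q)).
  + by apply: (Hd (a :: q)).
- by have [_ Hc] := HC u Uu; apply: (Hc (a :: b :: q)).
- by have [_ Hc] := HC u Uu; apply: (Hc (b :: a :: q)).
Qed.

Lemma swap0 f (U : set 'rV[R]_K) M : open U -> U 0 ->
  (forall u, U u -> CnP f M.+1 u) ->
  forall p a b q, size (p ++ a :: b :: q) = M.+1 ->
  pderivV f (p ++ a :: b :: q) 0 = pderivV f (p ++ b :: a :: q) 0.
Proof.
move=> oU U0 HC p a b q sz.
rewrite !pderivV_cat; apply: (pderivV_loc oU); last exact: U0.
move=> u Uu; apply: (swap_loc oU HC); last exact: Uu.
by move: sz; rewrite size_cat /= => <-; apply: leq_addl.
Qed.

Lemma move_end f (U : set 'rV[R]_K) M : open U -> U 0 ->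
  (forall u, U u -> CnP f M.+1 u) ->
  forall q p a, size (p ++ a :: q) = M.+1 ->
  pderivV f (p ++ a :: q) 0 = pderivV f (p ++ q ++ [:: a]) 0.
Proof.
move=> oU U0 HC; elim=> [|b q IH] p a sz; first by [].
rewrite (swap0 oU U0 HC sz).
have -> : p ++ b :: a :: q = (rcons p b) ++ a :: q by rewrite cat_rcons.
rewrite IH; first by rewrite cat_rcons.
by rewrite cat_rcons -sz !size_cat.
Qed.
End PV.

Section U.
Variables (R : realType) (K : nat) (dk : 'I_K -> nat).

Lemma uvec_shift (b x : cvec R dk) (c : Idx dk) (t : R) :
  uvec b (shiftx x c t) = uvec b x + t *: (b c *: delta_mx 0 (tag c)).
Proof.
apply/rowP => k; rewrite !mxE /dotk /shiftx.
have -> : \sum_(l < dk k) b (cidx l) * (if cidx l == c then x (cidx l) + t else x (cidx l))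
  = \sum_(l < dk k) b (cidx l) * x (cidx l) +
    \sum_(l < dk k) (if cidx l == c then b (cidx l) * t else 0).
  rewrite -big_split; apply: eq_bigr => l _ /=; case: ifP => _; ring.
congr (_ + _); case: c => kc lc /=.
have [ek|nk] := eqVneq k kc.
  subst kc; rewrite mulr1 (bigD1 lc) //= eqxx big1 ?addr0; first by ring.
  move=> l /negbTE nl.
  have -> : (cidx l == existT (fun k0 : 'I_K => 'I_(dk k0)) k lc) = (l == lc).
    by rewrite /cidx eq_Tagged.
  by rewrite nl.
rewrite (_ : false%:R = 0 :> R) // mulr0 mulr0 big1 // => l _.
case: ifP => // /eqP /(congr1 tag) /= ek.
by rewrite ek eqxx in nk.
Qed.
End U.

Section Gen2.
Variables (R : realType) (n : nat).
Implicit Types (f : 'rV[R]_n -> R).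

Lemma derivable_scale f (a v : 'rV[R]_n) (c : R) : derivable f a v ->
  derivable f a (c *: v).
Proof.
move=> df.
have e1 : (fun s => f (a + s *: (c *: v))) =
          (fun s : R => f (a + s *: v)) \o (fun s => c * s).
  by apply/funext => s /=; rewrite scalerA mulrC.
have hd : derivable (fun s : R => c * s) 0 1.
  have -> : (fun s : R => c * s) = c \*: id by [].
  by apply: derivableZ; exact: derivable_id.
have gd : derivable (fun s : R => f (a + s *: v)) (c * 0) 1.
  by apply/derivable_line; rewrite mulr0 scale0r addr0.
rewrite -[a](addr0 a) -(scale0r (c *: v)); apply/derivable_line; rewrite e1.
apply/derivable1_diffP; apply: differentiable_comp.
  exact/derivable1_diffP.
exact/derivable1_diffP.
Qed.

Lemma near_seg (P : set 'rV[R]_n) (u w : 'rV[R]_n) : (\forall v \near u, P v) ->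
  exists2 d : R, 0 < d & forall t : R, `|t| < d -> P (u + t *: w).
Proof.
move=> H; have [d d0 Hd] := @near_box R n _ _ 0 w H.
exists d => // t ht; have := Hd 0 t; rewrite normr0 scaler0 addr0; apply => //.
Qed.

Lemma sum_delta (y u : 'rV[R]_n) (t : R) k :
  \sum_i y 0 i * (u + t *: delta_mx 0 k) 0 i = \sum_i y 0 i * u 0 i + t * y 0 k.
Proof.
rewrite (eq_bigr (fun i => y 0 i * u 0 i + t * (y 0 i * (delta_mx 0 k : 'rV[R]_n) 0 i))); last first.
  by move=> i _; rewrite !mxE; ring.
rewrite big_split /=; congr (_ + _).
rewrite -mulr_sumr (bigD1 k) //= mxE !eqxx mulr1 big1 ?addr0 // => i /negbTE ni.
by rewrite mxE ni andbF mulr0.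
Qed.
End Gen2.

Section Env.
Variables (R : realType) (K : nat) (d : measure_display) (E : measurableType d)
  (B : set 'rV[R]_K) (D : 'rV[R]_K -> E -> \bar R) (mu : probability E R).

Lemma V_argmax u y0 : is_argmax (Bbar B) (util u (Dbar B D mu)) y0 ->
  V B D mu u = util u (Dbar B D mu) y0.
Proof.
move=> [By0 Hmax]; apply/eqP; rewrite eq_le; apply/andP; split.
  by apply: ge_ereal_sup => _ [y By <-]; exact: Hmax.
by apply: ereal_sup_ubound; exists y0.
Qed.

Lemma envelope (U : set 'rV[R]_K) : open U ->
  (forall u, U u -> V B D mu u \is a fin_num /\
     forall k, derivable (fun u => fine (V B D mu u)) u (delta_mx 0 k)) ->
  forall u y0, U u -> is_argmax (Bbar B) (util u (Dbar B D mu)) y0 ->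
  forall k, y0 0 k = derive (fun u => fine (V B D mu u)) u (delta_mx 0 k).
Proof.
move=> oU HU u y0 Uu am k.
set e : 'rV[R]_K := delta_mx 0 k.
set VV := (fun u => fine (V B D mu u)).
have [dd d0 Hd] := near_seg e (open_nbhs_nbhs (conj oU Uu)).
have Vu := V_argmax am.
have [fu _] := HU u Uu.
have fD : Dbar B D mu y0 \is a fin_num.
  by move: fu; rewrite Vu /util fin_numD => /andP[].
have ineq : forall t : R, `|t| < dd -> VV u + y0 0 k * t <= VV (u + t *: e).
  move=> t ht; have [fu' _] := HU _ (Hd t ht).
  have ge : (util (u + t *: e) (Dbar B D mu) y0 <= V B D mu (u + t *: e))%E.
    by apply: ereal_sup_ubound; exists y0 => //; case: am.
  rewrite /VV Vu /util -(fineK fD) -EFinD /= -lee_fin (fineK fu').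
  move: ge; rewrite /util sum_delta -(fineK fD) -EFinD.
  by apply: le_trans; rewrite lee_fin; lra.
pose g := (fun t : R => VV (u + t *: e)) - (y0 0 k) \*: (@id R).
have dl : forall t : R, t \in `]-dd, dd[ -> derivable (fun t : R => VV (u + t *: e)) t 1.
  move=> t; rewrite in_itv /= => /andP[t1 t2].
  have Ut : U (u + t *: e) by apply: Hd; rewrite ltr_norml t1 t2.
  by apply/derivable_line; exact: (HU _ Ut).2 k.
have did : forall t : R, derivable ((y0 0 k) \*: (@id R)) t 1.
  by move=> t; apply: derivableZ; exact: derivable_id.
have gder : forall t : R, t \in `]-dd, dd[ -> derivable g t 1.
  by move=> t tin; apply: derivableB; [exact: dl | exact: did].
have gmin : forall t : R, t \in `]-dd, dd[ -> g 0 <= g t.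
  move=> t; rewrite in_itv /= => /andP[t1 t2].
  have := ineq t; rewrite ltr_norml t1 t2 => /(_ isT).
  change (VV u + y0 0 k * t <= VV (u + t *: e) -> VV (u + 0 *: e) - y0 0 k * 0 <= VV (u + t *: e) - y0 0 k * t).
  rewrite scale0r addr0; lra.
have ledd : -dd <= dd by lra.
have in0 : (0:R) \in `]-dd, dd[ by rewrite in_itv /=; apply/andP; split; lra.
have [_ dg0] := derive1_at_min ledd gder in0 gmin.
move: dg0; rewrite deriveB; [|exact: dl|exact: did].
rewrite derive_line scale0r addr0 deriveZ ?derive_id; last exact: derivable_id.
rewrite /GRing.scale /= mulr1 => /eqP; rewrite subr_eq0 => /eqP ->.
by [].
Qed.
End Env.

Section Chain.
Variables (R : realType) (K : nat) (dk : 'I_K -> nat) (d : measure_display) (E : measurableType d)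
  (B : set 'rV[R]_K) (D : 'rV[R]_K -> E -> \bar R) (mu : probability E R)
  (Y : cvec R dk -> cvec R dk -> E -> 'rV[R]_K).

Variable (M : nat) (U : set 'rV[R]_K).
Hypothesis oU : open U.
Hypothesis HU : forall u, U u -> V B D mu u \is a fin_num /\
   CnP (fun u => fine (V B D mu u)) M.+1 u.
Hypothesis HA2 : forall x b : cvec R dk, exists y0 : 'rV[R]_K,
     (forall k, Ybar mu Y x b k = (y0 0 k)%:E) /\
     [set y | is_argmax (Bbar B) (util (uvec b x) (Dbar B D mu)) y] = [set y0].

Lemma Ybar_deriv x b k : U (uvec b x) ->
  fine (Ybar mu Y x b k) = pderivV (fun u => fine (V B D mu u)) [:: k] (uvec b x).
Proof.
move=> Uu; have [y0 [Hy Hs]] := HA2 x b.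
have am : is_argmax (Bbar B) (util (uvec b x) (Dbar B D mu)) y0.
  by have : [set y0] y0 by []; rewrite -Hs.
rewrite Hy /=; apply: (envelope oU) => //.
move=> u Uu'; have [fu [Hd _]] := HU Uu'; split => // k'.
exact: (Hd [::]).
Qed.

Lemma chain b k : forall s : seq (Idx dk), (size s <= M)%N -> forall x, U (uvec b x) ->
  pderivx (fun x => fine (Ybar mu Y x b k)) s x =
  mom s b * pderivV (fun u => fine (V B D mu u)) (map tag s ++ [:: k]) (uvec b x).
Proof.
elim=> [|c s IH] sz x Ux.
  by rewrite /mom big_nil mul1r /=; apply: Ybar_deriv.
set VV := (fun u => fine (V B D mu u)).
set G := pderivV VV (map tag s ++ [:: k]).
set u := uvec b x.
set w : 'rV[R]_K := b c *: delta_mx 0 (tag c).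
have nU : \forall t \near (0:R), U (u + t *: w).
  by apply: near_line; apply: open_nbhs_nbhs.
have sz' : (size s <= M)%N by apply: ltnW.
have -> : pderivx (fun x => fine (Ybar mu Y x b k)) (c :: s) x =
   derive (fun t : R => mom s b * G (u + t *: w)) 0 1.
  rewrite /=; apply: near_eq_derive; apply: filterS nU => t Ut.
  rewrite IH //; last by rewrite uvec_shift.
  by rewrite uvec_shift.
have dG : derivable G u (delta_mx 0 (tag c)).
  have [_ [Hd _]] := HU Ux; apply: Hd.
  by rewrite size_cat size_map /= addn1 ltnS.
rewrite deriveMl; last first.
  by apply/derivable_line; rewrite scale0r addr0; apply: derivable_scale.
rewrite derive_line scale0r addr0 derive_scale //.
rewrite /mom big_cons /=; rewrite -/(mom s b) /G; ring.
Qed.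
End Chain.

Section Box.
Variables (R : realType).

Lemma onesided (phi psi : R -> R) (dl : R) : 0 < dl ->
  derivable phi 0 1 -> derivable psi 0 1 ->
  (forall t, 0 <= t < dl -> phi t = psi t) -> derive phi 0 1 = derive psi 0 1.
Proof.
move=> dl0 dphi dpsi Heq.
have e0 : phi 0 = psi 0 by apply: Heq; rewrite lexx dl0.
rewrite /derive (cvg_at_rightE _ _ dphi) (cvg_at_rightE _ _ dpsi).
have H : \forall h \near (0:R)^'+,
   h^-1 *: ((phi \o shift 0) (h *: 1) - phi 0) = h^-1 *: ((psi \o shift 0) (h *: 1) - psi 0).
  exists dl => //= h; rewrite /ball_ /= sub0r normrN => hd h0.
  rewrite e0 [h *: 1]mulr1 /= addr0 Heq //.
  by rewrite (ltW h0) /= -(gtr0_norm h0).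
congr lim; rewrite eqEsubset; split; apply/near_eq_cvg => //.
by apply: filterS H => h ->.
Qed.

Variables (K : nat) (dk : 'I_K -> nat) (eps : R).

Definition inbox (x : cvec R dk) := forall c, 0 <= x c < eps.

Lemma inbox_shift x c (t : R) : inbox x -> 0 <= t < eps - x c -> inbox (shiftx x c t).
Proof.
move=> Bx /andP[t0 te] c'; rewrite /shiftx; case: eqP => [->|_]; last exact: Bx.
have /andP[xc0 xce] := Bx c.
apply/andP; split; first exact: addr_ge0.
by rewrite -ltrBrDl.
Qed.

Lemma box_pderiv (f g : cvec R dk -> R) : (forall x, inbox x -> f x = g x) ->
  forall s x, inbox x -> pderivablex f s x -> pderivablex g s x ->
  pderivx f s x = pderivx g s x.
Proof.
move=> fg; elim=> [|c s IH] x Bx /=; first by move=> _ _; exact: fg.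
move=> [df nf] [dg ng].
have [dl1 /= dl10 Hdl] := filterI nf ng.
have xc := Bx c; move/andP: xc => [xc0 xce].
have pos : 0 < Num.min dl1 (eps - x c) by rewrite lt_min dl10 subr_gt0.
apply: (onesided pos df dg) => t /andP[t0].
rewrite lt_min => /andP[t1 t2].
have := Hdl t; rewrite /ball_ /= sub0r normrN ger0_norm // => /(_ t1) [pf pg].
apply: IH => //; apply: inbox_shift => //.
by rewrite t0.
Qed.
End Box.

Section Key.
Variables (R : realType) (K : nat) (dk : 'I_K -> nat) (d : measure_display) (E : measurableType d)
  (B : set 'rV[R]_K) (D : 'rV[R]_K -> E -> \bar R) (mu : probability E R)
  (nu : probability (betaT R dk) R)
  (Y : cvec R dk -> cvec R dk -> E -> 'rV[R]_K).

Lemma uvec0 (b : cvec R dk) : uvec b (@zerox R K dk) = 0.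
Proof. by apply/rowP => k; rewrite !mxE /dotk big1 // => l _; rewrite /zerox mulr0. Qed.

Variable M : nat.
Hypothesis HA2 : forall x b : cvec R dk, exists y0 : 'rV[R]_K,
     (forall k, Ybar mu Y x b k = (y0 0 k)%:E) /\
     [set y | is_argmax (Bbar B) (util (uvec b x) (Dbar B D mu)) y] = [set y0].
Hypothesis HA5 : assumption5 B D mu nu Y M.

Definition PP (g : seq 'I_K) := pderivV (fun u => fine (V B D mu u)) g 0.

Lemma get_U : exists U : set 'rV[R]_K, [/\ open U, U 0 &
  forall u, U u -> V B D mu u \is a fin_num /\ CnP (fun u => fine (V B D mu u)) M.+1 u].
Proof.
have [_ [_ [[H1 H2] _]]] := HA5.
have HA := filterI H1 H2; have {}HA := HA (nbhs_filter (0 : 'rV[R]_K)).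
exists (interior [set u | V B D mu u \is a fin_num /\ CnP (fun u => fine (V B D mu u)) M.+1 u]).
split; first exact: open_interior.
  have HI := nbhs_interior HA; exact: (nbhs_singleton HI).
by move=> u /interior_subset.
Qed.

Lemma key (s : seq (Idx dk)) (k : 'I_K) : size s = M ->
  pderivx (fun x => fine (ASF mu nu Y x k)) s (@zerox R K dk) =
  PP (map tag s ++ [:: k]) * fine (\int[nu]_b (mom s b)%:E)%E.
Proof.
move=> sz.
have [U [oU U0 HU]] := get_U.
have [H5i [H5ii _]] := HA5.
have [_ Hint] := H5i k s sz.
have intm := H5ii s sz.
have fI := integrable_fin_num measurableT intm.
apply: EFin_inj; rewrite Hint EFinM fineK //.
rewrite -integralZl //.
apply: eq_integral => b _.
rewrite (chain oU HU HA2) ?uvec0 //; last by rewrite sz.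
by rewrite EFinM muleC.
Qed.

Lemma pp_move_end (p : seq 'I_K) a q : size (p ++ a :: q) = M.+1 ->
  PP (p ++ a :: q) = PP (p ++ q ++ [:: a]).
Proof.
move=> sz; have [U [oU U0 HU]] := get_U.
exact: (move_end (M:=M) oU U0 (fun u Uu => (HU u Uu).2) sz).
Qed.

Lemma pp_neq0 g : size g = M.+1 -> PP g != 0.
Proof. by move=> sz; have [_ [_ [_ H]]] := HA5; exact: H. Qed.

End Key.

Unset Implicit Arguments.
Set Strict Implicit.

Lemma nseqSr (T : Type) n (x : T) : nseq n.+1 x = nseq n x ++ [:: x].
Proof. by elim: n => //= n ->. Qed.

Lemma cancel_r (R : realType) (a b c : R) : c != 0 -> a * c = b * c -> a = b.
Proof. by move=> c0 /(mulIf c0). Qed.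

Theorem corollary1 (R : realType) (K : nat) (dk : 'I_K -> nat)
  (hK : (0 < K)%N) (hd1 : (0 < dk (Ordinal hK))%N)
  (Mbar : option nat) (hMbar : Mbar_ok Mbar)
  (d1 : measure_display) (E1 : measurableType d1)
  (B1 : set 'rV[R]_K) (D1 : 'rV[R]_K -> E1 -> \bar R)
  (mu1 : probability E1 R) (nu1 : probability (betaT R dk) R)
  (Y1 : cvec R dk -> cvec R dk -> E1 -> 'rV[R]_K)
  (d2 : measure_display) (E2 : measurableType d2)
  (B2 : set 'rV[R]_K) (D2 : 'rV[R]_K -> E2 -> \bar R)
  (mu2 : probability E2 R) (nu2 : probability (betaT R dk) R)
  (Y2 : cvec R dk -> cvec R dk -> E2 -> 'rV[R]_K) :
  hypotheses B1 D1 mu1 nu1 Y1 hd1 Mbar ->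
  hypotheses B2 D2 mu2 nu2 Y2 hd1 Mbar ->
  (* a priori known moments of beta_{1,1} *)
  (forall M, (0 < M)%N -> upto Mbar M ->
     (\int[nu1]_b (mom (nseq M (c11 hd1)) b)%:E =
      \int[nu2]_b (mom (nseq M (c11 hd1)) b)%:E)%E) ->
  (* same average structural function on H \cap R^d_+ *)
  (exists2 eps : R, 0 < eps &
     forall x : cvec R dk, (forall c, 0 <= x c < eps) ->
       forall k, ASF mu1 nu1 Y1 x k = ASF mu2 nu2 Y2 x k) ->
  forall A : set (betaT R dk), measurable A -> nu1 A = nu2 A.
Proof.
move=> [_ [_ [[HA2a _] [HM1 Hdet1]]]] [_ [_ [[HA2b _] [HM2 _]]]] Hmom [eps eps0 Hasf].
set one := Ordinal hK.
have main : forall M, (0 < M)%N -> upto Mbar M -> forall s : seq (Idx dk), size s = M ->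
    (\int[nu1]_b (mom s b)%:E = \int[nu2]_b (mom s b)%:E)%E.
  move=> M M0 HuM.
  have [A4a [A5a A6a]] := HM1 M M0 HuM.
  have [A4b [A5b A6b]] := HM2 M M0 HuM.
  pose I1 s := fine (\int[nu1]_b (mom s b)%:E)%E.
  pose I2 s := fine (\int[nu2]_b (mom s b)%:E)%E.
  pose P1 := PP B1 D1 mu1; pose P2 := PP B2 D2 mu2.
  have EQ : forall s k, size s = M ->
      P1 (map tag s ++ [:: k]) * I1 s = P2 (map tag s ++ [:: k]) * I2 s.
    move=> s k sz.
    rewrite /P1 /P2 /I1 /I2 -(key HA2a A5a k sz) -(key HA2b A5b k sz).
    have [H1 _] := A5a.1 k s sz; have [H2 _] := A5b.1 k s sz.
    apply: (box_pderiv (eps := eps)) => //.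
      by move=> x Bx; rewrite Hasf.
    by move=> c; rewrite /zerox lexx eps0.
  have fin1 : forall s : seq (Idx dk), size s = M ->
      (\int[nu1]_b (mom s b)%:E)%E \is a fin_num.
    by move=> s sz; exact: (integrable_fin_num measurableT (A5a.2.1 s sz)).
  have fin2 : forall s : seq (Idx dk), size s = M ->
      (\int[nu2]_b (mom s b)%:E)%E \is a fin_num.
    by move=> s sz; exact: (integrable_fin_num measurableT (A5b.2.1 s sz)).
  have base : forall k, P1 (nseq M one ++ [:: k]) = P2 (nseq M one ++ [:: k]).
    move=> k; have sz : size (nseq M (c11 hd1)) = M by rewrite size_nseq.
    have := EQ _ k sz; rewrite map_nseq.
    have -> : tag (c11 hd1) = one by [].
    have eqI : I1 (nseq M (c11 hd1)) = I2 (nseq M (c11 hd1)) by rewrite /I1 /I2 Hmom.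
    rewrite -eqI; apply: cancel_r.
    by rewrite /I1 fine_eq0 ?(fin1 _ sz) //; exact: A4a.2.
  have trans : forall (tau : seq 'I_K) k k', size tau = M ->
      P1 (tau ++ [:: k]) = P2 (tau ++ [:: k]) -> P1 (tau ++ [:: k']) = P2 (tau ++ [:: k']).
    move=> tau k k' sz Hk.
    have [s [ts [_ s0]]] := A6a tau sz.
    have ssz : size s = M by rewrite -sz -ts size_map.
    have I0 : I1 s != 0 by rewrite /I1 fine_eq0 ?(fin1 _ ssz).
    have e1 := EQ s k ssz; have e2 := EQ s k' ssz.
    rewrite ts in e1 e2.
    have sz1 : size (tau ++ [:: k]) = M.+1 by rewrite size_cat sz addn1.
    have eqI : I1 s = I2 s.
      rewrite Hk in e1; exact: (mulfI (pp_neq0 A5b sz1) e1).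
    rewrite -eqI in e2; exact: (@cancel_r _ _ _ _ I0 e2).
  have allP : forall n (g : seq 'I_K), count (predC1 one) g = n -> size g = M.+1 ->
      P1 g = P2 g.
    elim=> [|n IH] g cn sg.
      have : all (pred1 one) g.
        apply/allP => x xin; apply/negPn/negP => xn.
        have : has (predC1 one) g by apply/hasP; exists x.
        by rewrite has_count cn.
      by move/all_pred1P; rewrite sg nseqSr => ->; exact: base.
    have : has (predC1 one) g by rewrite has_count cn.
    case/hasP => a ain an.
    move: cn sg; case/splitPr: ain => p q cn sg.
    rewrite /P1 /P2 (pp_move_end A5a sg) (pp_move_end A5b sg) catA.
    have szpq : size (p ++ q) = M by move: sg; rewrite !size_cat /=; lia.
    apply: (trans _ one) => //.
    rewrite -catA; apply: IH.
      have an' : (a != one) = true := an.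
      move: cn; rewrite !count_cat /= an' /=; lia.
    by move: sg; rewrite !size_cat /=; lia.
  move=> s sz.
  have e := EQ s one sz.
  have sz1 : size (map tag s ++ [:: one]) = M.+1 by rewrite size_cat size_map sz addn1.
  rewrite (allP _ _ erefl sz1) in e.
  have eqI : I1 s = I2 s := mulfI (pp_neq0 A5b sz1) e.
  rewrite -(fineK (fin1 s sz)) -(fineK (fin2 s sz)); congr (_%:E); exact: eqI.
move=> A mA; apply/esym; apply: Hdet1 => // s s0 hup.
have [_ [A5b _]] := HM2 (size s) s0 hup.
split; first exact: (A5b.2.1 s erefl).
by apply/esym; exact: (main (size s) s0 hup s erefl).
Qed.
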